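(* Let $R\subseteq S_n$ be a top-$k$ partial ranking, $\sigma\in R$ and $\tau\in S_n$. Then $d(\sigma,\tau)=d(\sigma,\Pi_R(\tau))+d(\Pi_R(\tau),\tau)$.
   Context: $S_n$ is the symmetric group on $[n]$; $\sigma\in S_n$ is identified with the full ranking $\sigma(1)\succ\cdots\succ\sigma(n)$. For distinct items $x,y$, $\{x,y\}$ is discordant for $\sigma,\tau$ if $(\sigma^{-1}(x)-\sigma^{-1}(y))(\tau^{-1}(x)-\tau^{-1}(y))<0$. The Kendall distance $d(\sigma,\tau)$ is the number of unordered discordant pairs. For $0\le k\le n$ and distinct $a_1,\dots,a_k\in[n]$, the top-$k$ partial ranking is the set $R=\{\sigma\in S_n:\sigma(i)=a_i,\ i\le k\}$. For $\tau\in S_n$, $\Pi_R(\tau)$ denotes the unique element of $R$ minimising $\rho\mapsto d(\rho,\tau)$ over $\rho\in R$ (this minimiser exists and is unique). *)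

(* Defs.v *)
(* Items and positions are 'I_n (0-based: position i of the
   paper corresponds to i.-1 here). A ranking sigma : {perm 'I_n} maps a
   position to the item at that position; (sigma^-1) x is the position of x. *)
From mathcomp Require Import all_boot all_order all_fingroup.
Set Implicit Arguments. Unset Strict Implicit. Unset Printing Implicit Defensive.

Local Open Scope group_scope.

Definition discordant n (s t : {perm 'I_n}) (x y : 'I_n) : bool :=
  (x != y) && ((s^-1 x < s^-1 y)%N != (t^-1 x < t^-1 y)%N).

Definition kendall n (s t : {perm 'I_n}) : nat :=
  #|[set p : 'I_n * 'I_n | (p.1 < p.2)%N && discordant s t p.1 p.2]|.

Definition topk n k (a : 'I_k -> 'I_n) : {set {perm 'I_n}} :=
  [set s : {perm 'I_n} |
     [forall i : 'I_n, forall j : 'I_k, (val i == val j) ==> (s i == a j)]].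

Definition is_proj n (R : {set {perm 'I_n}}) (tau rho : {perm 'I_n}) : Prop :=
  rho \in R /\ forall rho', rho' \in R -> (kendall rho tau <= kendall rho' tau)%N.

(* Main.v *)
Require Import Defs.
From mathcomp Require Import all_boot all_order all_fingroup.
From mathcomp Require Import zify.
Set Implicit Arguments. Unset Strict Implicit. Unset Printing Implicit Defensive.
Local Open Scope group_scope.

Section S.
Variables (n k : nat) (a : 'I_k -> 'I_n).

Lemma topkP (s : {perm 'I_n}) : s \in topk a ->
  forall (i : 'I_n) (j : 'I_k), val i = val j -> s i = a j.
Proof.
rewrite inE => /forallP H i j e.
move/forallP: (H i) => /(_ j) /implyP H2.
by apply/eqP; apply: H2; apply/eqP.
Qed.

Lemma top_same (s r : {perm 'I_n}) x : s \in topk a -> r \in topk a ->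
  (nat_of_ord (r^-1 x) < k)%N -> s^-1 x = r^-1 x.
Proof.
move=> Hs Hr lt.
have E : s (r^-1 x) = r (r^-1 x).
  by rewrite (topkP Hs (j:=Ordinal lt)) // (topkP Hr (j:=Ordinal lt)).
rewrite permKV in E; by apply: (canLR (permK s)); rewrite E.
Qed.

Lemma free_same (s r : {perm 'I_n}) x : s \in topk a -> r \in topk a ->
  (k <= nat_of_ord (r^-1 x))%N -> (k <= nat_of_ord (s^-1 x))%N.
Proof.
move=> Hs Hr h; case: (ltnP (s^-1 x) k) => // h2.
by move: h; rewrite (top_same Hr Hs h2) leqNgt h2.
Qed.

Lemma perm_val_inj (p : {perm 'I_n}) x y : x != y -> nat_of_ord (p^-1 x) != nat_of_ord (p^-1 y).
Proof. move=> nxy; apply/eqP => /val_inj /perm_inj e; by rewrite e eqxx in nxy. Qed.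

Lemma disc_sym (s t : {perm 'I_n}) x y : discordant s t x y = discordant s t y x.
Proof.
rewrite /discordant eq_sym; case: (altP (y =P x)) => [//|nyx] /=.
have h (p : {perm 'I_n}) : (nat_of_ord (p^-1 x) < p^-1 y)%N = ~~ (nat_of_ord (p^-1 y) < p^-1 x)%N.
  by rewrite -leqNgt ltn_neqAle perm_val_inj // eq_sym.
rewrite (h s) (h t); by do 2 case: (_ < _)%N.
Qed.

Lemma disc_sr (s r : {perm 'I_n}) x y : s \in topk a -> r \in topk a ->
  discordant s r x y -> (k <= nat_of_ord (r^-1 x))%N /\ (k <= nat_of_ord (r^-1 y))%N.
Proof.
move=> Hs Hr /andP[nxy]; case: (ltnP (r^-1 x) k) => hx; case: (ltnP (r^-1 y) k) => hy.
- by rewrite !(top_same Hs Hr) // eqxx.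
- have h2 := free_same Hs Hr hy.
  rewrite (top_same Hs Hr hx) (leq_trans hx h2) (leq_trans hx hy) //.
- have h2 := free_same Hs Hr hx.
  rewrite (top_same Hs Hr hy) ltnNge (leq_trans (ltnW hy) h2) ltnNge (leq_trans (ltnW hy) hx) //.
- by [].
Qed.

Lemma cmpL (r : {perm 'I_n}) x y u v : nat_of_ord (r^-1 y) = (r^-1 x).+1 -> u != v -> ~~ ((u == x) && (v == y) || (u == y) && (v == x)) ->
    (nat_of_ord (r^-1 (tperm x y u)) < r^-1 (tperm x y v))%N = (nat_of_ord (r^-1 u) < r^-1 v)%N.
Proof.
move=> exy.
have F w1 w2 : w1 != w2 -> nat_of_ord (r^-1 w1) != r^-1 w2 := @perm_val_inj r w1 w2.
have nxy : x != y by apply/eqP=> e; move: exy; rewrite e; lia.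
case: (boolP (u == x)) => [/eqP eu|ux]; case: (boolP (u == y)) => [/eqP eu'|uy];
case: (boolP (v == x)) => [/eqP ev|vx]; case: (boolP (v == y)) => [/eqP ev'|vy];
try subst u; try subst v; rewrite ?eqxx ?andbT ?orbT ?tpermL ?tpermR //= => nuv _;
rewrite ?tpermD // 1?eq_sym //.
all: try by rewrite eu' eqxx in nxy.
all: apply/idP/idP; try (have := F _ _ ux); try (have := F _ _ uy); try (have := F _ _ vx); try (have := F _ _ vy);
  try (have := F _ _ nuv); move: exy; lia.
Qed.

Lemma swap_dec (tau r : {perm 'I_n}) x y : r \in topk a -> (k <= r^-1 x)%N ->
  nat_of_ord (r^-1 y) = (r^-1 x).+1 -> (nat_of_ord (tau^-1 y) < tau^-1 x)%N ->
  exists2 r', r' \in topk a & (kendall r' tau < kendall r tau)%N.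
Proof.
move=> Hr kx exy txy.
have nxy : x != y by apply/eqP=> e; move: exy; rewrite e; lia.
set r' := r * tperm x y.
have Er' w : r'^-1 w = r^-1 (tperm x y w) by rewrite /r' invMg permM tpermV.
exists r'.
  rewrite inE; apply/forallP=> i; apply/forallP=> j; apply/implyP=> /eqP e.
  have {}e : nat_of_ord i = nat_of_ord j := e.
  rewrite permM (topkP Hr e) tpermD //.
  - apply/eqP=> ax.
    have h : r^-1 x = i by rewrite ax -(topkP Hr e) permK.
    by move: kx (ltn_ord j); rewrite h e; lia.
  - apply/eqP=> ay.
    have h : r^-1 y = i by rewrite ay -(topkP Hr e) permK.
    by move: exy kx (ltn_ord j); rewrite h e; lia.
have cmp u v : u != v -> ~~ ((u == x) && (v == y) || (u == y) && (v == x)) ->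
    (nat_of_ord (r'^-1 u) < r'^-1 v)%N = (nat_of_ord (r^-1 u) < r^-1 v)%N.
  by rewrite !Er'; apply: cmpL.
have Dxy : discordant r tau x y.
  by rewrite /discordant nxy /= exy leqnn ltnNge (ltnW txy).
have Dxy' : ~~ discordant r' tau x y.
  rewrite /discordant nxy /= !Er' tpermL tpermR exy ltnNge leqnSn ltnNge (ltnW txy) //.
rewrite /kendall; apply: proper_card; apply/properP; split.
  apply/subsetP=> p; rewrite !inE => /andP[lt12 D]; rewrite lt12 /=.
  have nuv : p.1 != p.2 by move: lt12; apply: contraTneq => ->; rewrite ltnn.
  case: (boolP ((p.1 == x) && (p.2 == y) || (p.1 == y) && (p.2 == x))) => hp.
    case/orP: hp => /andP[/eqP e1 /eqP e2]; move: D; rewrite e1 e2.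
      by rewrite (negbTE Dxy').
    by rewrite disc_sym (negbTE Dxy').
  by move: D; rewrite /discordant (cmp _ _ nuv hp).
case: (ltngtP x y) => h.
- exists (x, y); rewrite !inE /=; [by apply/andP | by rewrite (negbTE Dxy') andbF].
- exists (y, x); rewrite !inE /= disc_sym; [by apply/andP | by rewrite (negbTE Dxy') andbF].
- by move: nxy; rewrite (val_inj h) eqxx.
Qed.

Lemma no_disc tau r : is_proj (topk a) tau r -> forall d x y,
  (k <= r^-1 x)%N -> nat_of_ord (r^-1 y) = (r^-1 x + d.+1)%N ->
  (nat_of_ord (tau^-1 y) < tau^-1 x)%N -> False.
Proof.
case=> Hr Hmin d; elim/ltn_ind: d => d IH x y kx exy txy.
case: d IH exy => [|d'] IH exy.
  have [r' Hr' lt] := swap_dec Hr kx (etrans exy (addn1 _)) txy.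
  by move: (Hmin r' Hr'); rewrite leqNgt lt.
have hz : ((r^-1 x).+1 < n)%N by have := ltn_ord (r^-1 y); lia.
set z := r (Ordinal hz).
have ez : r^-1 z = Ordinal hz by rewrite permK.
case: (ltnP (tau^-1 z) (tau^-1 x)) => hzx.
  by apply: (IH 0 _ x z kx) => //; rewrite ez /= addn1.
apply: (IH d' _ z y) => //.
- by rewrite ez /=; lia.
- by rewrite ez /=; lia.
- exact: leq_trans txy hzx.
Qed.

Lemma free_nodisc tau r x y : is_proj (topk a) tau r ->
  (k <= r^-1 x)%N -> (k <= r^-1 y)%N -> ~~ discordant r tau x y.
Proof.
move=> Hp kx ky; apply/negP => D.
wlog lt : x y D kx ky / (nat_of_ord (r^-1 x) < r^-1 y)%N.
  move=> W; case: (ltngtP (r^-1 x) (r^-1 y)) => h.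
  - exact: (W x y).
  - by apply: (W y x) => //; rewrite disc_sym.
  - by move: D => /andP[nxy _]; move: nxy; rewrite (perm_inj (val_inj h)) eqxx.
move: D => /andP[nxy]; rewrite lt /= => tt.
have ne := perm_val_inj tau nxy.
have tyx : (nat_of_ord (tau^-1 y) < tau^-1 x)%N by move: tt ne; lia.
apply: (@no_disc tau r Hp (r^-1 y - r^-1 x).-1 x y kx _ tyx).
move: lt; lia.
Qed.

Lemma xb (A B C : bool) : ~~ ((A != B) && (B != C)) -> (A != C) = (A != B) || (B != C).
Proof. by case: A; case: B; case: C. Qed.

End S.

Theorem lemma5 (n k : nat) (a : 'I_k -> 'I_n) (Ha : injective a)
  (sigma tau rho : {perm 'I_n}) :
  sigma \in topk a -> is_proj (topk a) tau rho ->
  kendall sigma tau = (kendall sigma rho + kendall rho tau)%N.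
Proof.
move=> Hs Hp; have Hr := Hp.1.
have nb x y : ~~ (discordant sigma rho x y && discordant rho tau x y).
  apply/negP => /andP[D1 D2]; have [kx ky] := disc_sr Hs Hr D1.
  by move: (free_nodisc Hp kx ky); rewrite D2.
rewrite /kendall.
set A := [set p : 'I_n * 'I_n | (p.1 < p.2)%N && discordant sigma rho p.1 p.2].
set B := [set p : 'I_n * 'I_n | (p.1 < p.2)%N && discordant rho tau p.1 p.2].
have D : A :&: B = set0.
  apply/setP=> p; rewrite !inE; apply/negbTE/negP => /andP[/andP[_ D1] /andP[_ D2]].
  by move: (nb p.1 p.2); rewrite D1 D2.
have H := cardsU A B; rewrite D cards0 subn0 in H; rewrite -H.
apply: eq_card => p; rewrite !inE.
case: (_ < _)%N => //=.
move: (nb p.1 p.2); rewrite /discordant; case: (p.1 != p.2) => //= H0.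
exact: xb.
Qed.
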